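(* Let $G,H$ be non-discrete unimodular lcsc compactly generated groups and let $(\Omega,X_G,X_H,\mu)$ be a measure equivalence coupling between them satisfying properties (P1) and (P3) below. Then there is a constant $K'>0$ (independent of $f$ and $p$) such that for every $p\ge1$ and every $f\in\mathrm{L}^p(H)$ with support of finite measure, $$\int_{X_G}\|f_x\|_p^p\,d\nu_G(x)\ge K'\|f\|_p^p.$$
   Context: Measure equivalence coupling: measure space $(\Omega,\mu)$ with commuting measure-preserving $G$- and $H$-actions (written $\ast$), subsets $X_G,X_H$ with finite measures $\nu_G,\nu_H$ such that $(g,x)\mapsto g\ast x$ is a measure space isomorphism $(G\times X_G,\lambda_G\otimes\nu_G)\to(\Omega,\mu)$ and likewise for $H\times X_H$. Induced action: $g\cdot x$ is the unique point of $(H\ast g\ast x)\cap X_H$ ($g\in G,x\in X_H$), cocycle $\alpha(g,x)\ast g\ast x=g\cdot x$; symmetrically $H\curvearrowright X_G$ with cocycle $\beta$. $R^G_Y(x)=\{g: g\cdot x\in Y\}$, $R^H_Y(x)=\{h:h\cdot x\in Y\}$. (P1): there is $C>0$ with $\nu_G|_{X_G\cap X_H}=C\nu_H|_{X_G\cap X_H}$ and $\nu_G(X_G\cap X_H)>0$. (P3): for a.e. $x\in X_H$, $\alpha(\cdot,x)\colon(R^G_{X_G\cap X_H}(x),\lambda_G)\to(\alpha(R^G_{X_G\cap X_H}(x),x),\lambda_H)$ is measure preserving, and for a.e. $x\in X_G$, $\beta(\cdot,x)\colon(R^H_{X_G\cap X_H}(x),\lambda_H)\to(\beta(R^H_{X_G\cap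 X_H}(x),x),\lambda_G)$ is measure preserving. Given $f\colon H\to\mathbb{R}$, $\tilde f(h\ast x)=f(h^{-1})$ ($h\in H$, $x\in X_H$) and $f_x(g)=\tilde f(g\ast x)$ for $x\in X_G$, $g\in G$. *)

(* Defs.v *)
From HB Require Import structures.
From mathcomp Require Import all_boot all_order all_algebra.
From mathcomp Require Import all_classical all_reals all_analysis.
Set Implicit Arguments. Unset Strict Implicit. Unset Printing Implicit Defensive.
Import Order.TTheory GRing.Theory Num.Theory.
Local Open Scope classical_set_scope.
Local Open Scope ring_scope.

Notation Bor G := (g_sigma_algebraType (@open G)).

Definition is_group {T : Type} (mul : T -> T -> T) (one : T) (inv : T -> T) :=
  [/\ forall x y z, mul x (mul y z) = mul (mul x y) z,
      forall x, mul one x = x, forall x, mul x one = x,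
      forall x, mul (inv x) x = one & forall x, mul x (inv x) = one].

Definition topological_group (G : ptopologicalType)
  (mul : G -> G -> G) (one : G) (inv : G -> G) :=
  [/\ is_group mul one inv,
      continuous (fun p : G * G => mul p.1 p.2) & continuous inv].

Definition lcsc (G : ptopologicalType) :=
  [/\ locally_compact [set: G], hausdorff_space G & @second_countable G].

Definition generates {T : Type} (mul : T -> T -> T) (one : T) (inv : T -> T)
  (S : set T) :=
  forall U : set T, S `<=` U -> U one -> (forall x y, U x -> U y -> U (mul x y)) ->
    (forall x, U x -> U (inv x)) -> U = setT.

Definition compactly_generated (G : ptopologicalType)
  (mul : G -> G -> G) (one : G) (inv : G -> G) :=
  exists K : set G, compact K /\ generates mul one inv K.

Definition non_discrete (G : ptopologicalType) := ~ (forall x : G, open [set x]).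

(* lam is a Haar measure (nonzero, left-invariant, Radon) on the lcsc group G,
   and G is unimodular, i.e. lam is also right-invariant. *)
Definition unimodular_haar (R : realType) (G : ptopologicalType)
  (mul : G -> G -> G) (lam : {measure set (Bor G) -> \bar R}) :=
  [/\ forall g (A : set (Bor G)), measurable A -> lam [set x | A (mul g x)] = lam A,
      forall g (A : set (Bor G)), measurable A -> lam [set x | A (mul x g)] = lam A,
      forall K : set G, compact K -> (lam K < +oo)%E &
      forall U : set G, open U -> U !=set0 -> (0 < lam U)%E].

Definition mp_action (R : realType) (G : ptopologicalType)
  (mul : G -> G -> G) (one : G) d (Om : measurableType d)
  (mu : {measure set Om -> \bar R}) (act : G -> Om -> Om) :=
  [/\ measurable_fun setT (fun p : (Bor G * Om)%type => act p.1 p.2),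
      forall w, act one w = w,
      forall g1 g2 w, act (mul g1 g2) w = act g1 (act g2 w) &
      forall g (A : set Om), measurable A -> mu (act g @^-1` A) = mu A].

(* (g,x) |-> act g x is a measure space isomorphism
   (G x X, lam (x) nu) -> (Om, mu), with (measurable) inverse w |-> (pi w, rho w);
   nu is a finite measure on X (given as a measure on Om, only used on X). *)
Definition fund_iso (R : realType) (G : ptopologicalType) d (Om : measurableType d)
  (lam : {measure set (Bor G) -> \bar R}) (mu : {measure set Om -> \bar R})
  (act : G -> Om -> Om) (X : set Om) (nu : {measure set Om -> \bar R})
  (pi : Om -> G) (rho : Om -> Om) :=
  [/\ measurable X /\ (nu X < +oo)%E,
      measurable_fun setT (fun w : Om => ((pi w : Bor G), rho w)),
      forall w, X (rho w) /\ act (pi w) (rho w) = w,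
      forall g x, X x -> pi (act g x) = g /\ rho (act g x) = x &
      forall A : set Om, measurable A ->
        mu A = (lam \x nu)%E [set p : (Bor G * Om)%type | X p.2 /\ A (act p.1 p.2)]].

Definition propP1 (R : realType) d (Om : measurableType d)
  (XG XH : set Om) (nuG nuH : {measure set Om -> \bar R}) :=
  exists C : R, 0 < C /\
    (forall A : set Om, measurable A ->
        nuG (A `&` (XG `&` XH)) = (C%:E * nuH (A `&` (XG `&` XH)))%E) /\
    (0 < nuG (XG `&` XH))%E.

Definition mp_between (R : realType) d1 d2 (T1 : measurableType d1)
  (T2 : measurableType d2) (lam1 : {measure set T1 -> \bar R})
  (lam2 : {measure set T2 -> \bar R}) (A : set T1) (f : T1 -> T2) :=
  [/\ measurable A, measurable (f @` A), measurable_fun A f &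
      forall B : set T2, measurable B ->
        lam1 (A `&` f @^-1` B) = lam2 (B `&` f @` A)].

(* induced action g.x (for x in XH) and cocycle alpha(g,x), defined through the
   inverse (piH, rhoH) of (h,x) |-> h * x on H x XH:
   g * x = piH(g*x) * rhoH(g*x), so g.x = rhoH (g*x), alpha(g,x) = piH(g*x)^-1. *)
Definition ind_dot {G H Om : Type} (actG : G -> Om -> Om) (rhoH : Om -> Om)
  (g : G) (x : Om) := rhoH (actG g x).
Definition cocycle {G H Om : Type} (actG : G -> Om -> Om) (invH : H -> H)
  (piH : Om -> H) (g : G) (x : Om) := invH (piH (actG g x)).
Definition Rset {G H Om : Type} (actG : G -> Om -> Om) (rhoH : Om -> Om)
  (Y : set Om) (x : Om) : set G := [set g | Y (@ind_dot G H Om actG rhoH g x)].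

Definition propP3 (R : realType) (G H : ptopologicalType) d (Om : measurableType d)
  (invG : G -> G) (invH : H -> H)
  (lamG : {measure set (Bor G) -> \bar R}) (lamH : {measure set (Bor H) -> \bar R})
  (actG : G -> Om -> Om) (actH : H -> Om -> Om) (XG XH : set Om)
  (nuG nuH : {measure set Om -> \bar R})
  (piG : Om -> G) (rhoG : Om -> Om) (piH : Om -> H) (rhoH : Om -> Om) :=
  {ae nuH, forall x, XH x ->
     mp_between lamG lamH (@Rset G H Om actG rhoH (XG `&` XH) x)
       (fun g : Bor G => (@cocycle G H Om actG invH piH g x : Bor H))} /\
  {ae nuG, forall x, XG x ->
     mp_between lamH lamG (@Rset H G Om actH rhoG (XG `&` XH) x)
       (fun h : Bor H => (@cocycle H G Om actH invG piG h x : Bor G))}.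

(* tilde f (h * x) = f (h^-1) for h in H, x in XH *)
Definition ftilde {R H Om : Type} (invH : H -> H) (piH : Om -> H) (f : H -> R)
  (w : Om) : R := f (invH (piH w)).

(* Main.v *)
Require Import Defs.
From HB Require Import structures.
From mathcomp Require Import all_boot all_order all_algebra.
From mathcomp Require Import all_classical all_reals all_analysis.
From mathcomp Require Import measurable_realfun.
Import Order.TTheory GRing.Theory Num.Theory.
Local Open Scope classical_set_scope.
Local Open Scope ring_scope.


Lemma open_Bor (T : ptopologicalType) (A : set T) : open A -> measurable (A : set (Bor T)).
Proof. by move=> oA; apply: sub_gen_smallest. Qed.

Lemma closed_Bor (T : ptopologicalType) (A : set T) : closed A -> measurable (A : set (Bor T)).
Proof.
move=> cA; rewrite -(setCK A); apply: measurableC; apply: open_Bor.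
by rewrite openC.
Qed.

Lemma cont_mfun (T U : ptopologicalType) (f : T -> U) : continuous f ->
  measurable_fun setT (f : Bor T -> Bor U).
Proof.
move=> cf; apply: (@measurability _ _ (Bor T) (Bor U) setT f (@open U)) => //.
move=> _ [B oB <-]; rewrite setTI; apply: open_Bor.
by move/continuousP: cf; apply.
Qed.

Lemma prod_open_Bor (T : ptopologicalType) : @second_countable T ->
  forall W : set (T * T), open W -> measurable (W : set (Bor T * Bor T)%type).
Proof.
move=> [B cB [Bo Bb]] W oW.
have [g gs] : exists g : nat -> set T, set_surj setT B g.
  by move/pcard_surjP: cB.
pose F (p : set T * set T) : set (T * T) :=
  if `[< B p.1 /\ B p.2 /\ p.1 `*` p.2 `<=` W >] then p.1 `*` p.2 else set0.
have -> : W = \bigcup_n \bigcup_m F (g n, g m).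
  apply/seteqP; split; last first.
    move=> z [n _ [m _]]; rewrite /F; case: asboolP => [[_ [_ h]]|_] //.
    by move/h.
  move=> [x y] Wz.
  have : nbhs (x, y) W by apply: open_nbhs_nbhs.
  move=> [[P Q] /= [nP nQ] PQW].
  have [U [BU Ux] UP] := Bb x P nP.
  have [V [BV Vy] VQ] := Bb y Q nQ.
  have [n _ gn] := gs U BU; have [m _ gm] := gs V BV.
  exists n => //; exists m => //; rewrite /F /= gn gm.
  case: asboolP => // nh; exfalso; apply: nh; split => //; split => //.
  by move=> [a b] [/= Ua Vb]; apply: PQW; split; [exact: UP | exact: VQ].
apply: bigcupT_measurable => n; apply: bigcupT_measurable => m.
rewrite /F; case: asboolP => [[BU [BV _]]|_] //.
by apply: measurableX; apply: open_Bor; apply: Bo.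
Qed.

Lemma mul_mfun (T : ptopologicalType) (mul : T -> T -> T) : @second_countable T ->
  continuous (fun p : T * T => mul p.1 p.2) ->
  measurable_fun setT (fun p : (Bor T * Bor T)%type => (mul p.1 p.2 : Bor T)).
Proof.
move=> sc cm.
apply: (@measurability _ _ (Bor T * Bor T)%type (Bor T) setT _ (@open T)) => //.
move=> _ [B oB <-]; rewrite setTI; apply: prod_open_Bor => //.
by move/continuousP: cm; apply.
Qed.

Lemma lc_basis (T : ptopologicalType) (B : set (set T)) : lcsc T -> basis B ->
  forall x : T, exists V, [/\ B V, V x & exists K, [/\ compact K, closed K & V `<=` K]].
Proof.
move=> [lc hs sc] [Bo Bb] x.
have := lc x I; rewrite /= withinET => -[U nU [cU clU]].
have [V [BV Vx] VU] := Bb x U nU.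
by exists V; split => //; exists U.
Qed.

Lemma lcsc_sigma_finite (R : realType) (T : ptopologicalType)
  (lam : {measure set (Bor T) -> \bar R}) : lcsc T ->
  (forall K : set T, compact K -> (lam K < +oo)%E) -> sigma_finite setT lam.
Proof.
move=> lcs fin; have [lc hs [B cB [Bo Bb]]] := lcs.
have [g gs] : exists g : nat -> set T, set_surj setT B g.
  by move/pcard_surjP: cB.
pose F n : set T :=
  if `[< B (g n) /\ exists K, compact K /\ g n `<=` K >] then g n else set0.
exists (fun n => F n : set (Bor T)).
  apply/seteqP; split => // x _.
  have [V [BV Vx [K [cK clK VK]]]] := @lc_basis T B lcs (conj Bo Bb) x.
  have [n _ gn] := gs V BV.
  exists n => //; rewrite /F; case: asboolP => [_|nh]; first by rewrite gn.
  by exfalso; apply: nh; rewrite gn; split => //; exists K.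
move=> n; rewrite /F; case: asboolP => [[BV [K [cK VK]]]|_]; last first.
  by split => //; rewrite measure0.
split; first by apply: open_Bor; apply: Bo.
apply: (le_lt_trans _ (fin K cK)); apply: le_measure; rewrite ?inE //.
  by apply: open_Bor; apply: Bo.
by apply: closed_Bor; apply: compact_closed.
Qed.

Lemma lcsc_pos_fin (R : realType) (T : ptopologicalType)
  (lam : {measure set (Bor T) -> \bar R}) : lcsc T ->
  (forall K : set T, compact K -> (lam K < +oo)%E) ->
  (forall U : set T, open U -> U !=set0 -> (0 < lam U)%E) ->
  forall x : T, exists U : set T, [/\ open U, U x, (0 < lam U)%E & (lam U < +oo)%E].
Proof.
move=> lcs fin pos x; have [lc hs [B cB [Bo Bb]]] := lcs.
have [V [BV Vx [K [cK clK VK]]]] := @lc_basis T B lcs (conj Bo Bb) x.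
exists V; split => //; first exact: Bo.
  by apply: pos; [exact: Bo | exists x].
apply: (le_lt_trans _ (fin K cK)); apply: le_measure; rewrite ?inE //.
  by apply: open_Bor; apply: Bo.
by apply: closed_Bor.
Qed.



Lemma grp_invM {T : Type} (mul : T -> T -> T) (one : T) (inv : T -> T) :
  is_group mul one inv -> forall a b, inv (mul a b) = mul (inv b) (inv a).
Proof.
move=> [mA m1 m1' mV mV'] a b.
have h : mul (inv (mul a b)) (mul a b) = one by [].
rewrite -[RHS]m1 -h -!mA [mul b (mul _ _)]mA mV' m1 mV' m1'.
done.
Qed.

Lemma sigma_finite_tonelli d1 d2 (T1 : measurableType d1) (T2 : measurableType d2)
  (R : realType) (m1 : {sigma_finite_measure set T1 -> \bar R})
  (m2 : {sigma_finite_measure set T2 -> \bar R}) (S : set (T1 * T2)) :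
  measurable S ->
  (\int[m1]_x m2 (xsection S x) = \int[m2]_y m1 (ysection S y))%E.
Proof.
move=> mS; have := indic_fubini_tonelli m1 m2 mS.
by rewrite indic_fubini_tonelli_FE // indic_fubini_tonelli_GE.
Qed.
Arguments sigma_finite_tonelli {d1 d2 T1 T2 R} m1 m2 {S}.

Section Inv.
Context (R : realType) (H : ptopologicalType) (mul : H -> H -> H) (one : H)
  (inv : H -> H) (lam : {measure set (Bor H) -> \bar R}).
Hypotheses (hg : is_group mul one inv)
  (hmul : measurable_fun setT (fun p : (Bor H * Bor H)%type => (mul p.1 p.2 : Bor H)))
  (hinv : measurable_fun setT (inv : Bor H -> Bor H))
  (hl : forall g (A : set (Bor H)), measurable A -> lam [set x | A (mul g x)] = lam A)
  (hr : forall g (A : set (Bor H)), measurable A -> lam [set x | A (mul x g)] = lam A)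
  (hs : sigma_finite setT lam)
  (B0 : set (Bor H)) (mB0 : measurable B0) (B0pos : (0 < lam B0)%E)
  (B0fin : (lam B0 < +oo)%E).

Definition lamf : set (Bor H) -> \bar R := lam.
HB.instance Definition _ := Measure.on lamf.
HB.instance Definition _ := Measure_isSigmaFinite.Build _ _ _ lamf hs.

Let lam' : {sigma_finite_measure set (Bor H) -> \bar R} := lamf.

Let mpre (f : (Bor H * Bor H)%type -> Bor H) (A : set (Bor H)) :
  measurable_fun setT f -> measurable A -> measurable (f @^-1` A).
Proof. by move=> mf mA; rewrite -[_ @^-1` _]setTI; apply: mf. Qed.

Lemma haar_inv (A : set (Bor H)) : measurable A -> lam (inv @^-1` A) = lam A.
Proof.
move=> mA.
have [mA' m1 m1' mV mV'] := hg.
pose S1 := [set p : (Bor H * Bor H)%type | A p.1 /\ B0 (mul p.1 p.2)].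
pose S2 := [set p : (Bor H * Bor H)%type | B0 p.1 /\ A (mul p.1 (inv p.2))].
have mS1 : measurable S1.
  apply: measurableI.
    by apply: (mpre fst) => //; exact: measurable_fst.
  exact: (mpre (fun p => mul p.1 p.2)).
have mmi : measurable_fun setT (fun p : (Bor H * Bor H)%type => (mul p.1 (inv p.2) : Bor H)).
  rewrite (_ : (fun p : (Bor H * Bor H)%type => (mul p.1 (inv p.2) : Bor H)) =
    (fun p : (Bor H * Bor H)%type => (mul p.1 p.2 : Bor H)) \o
    (fun p : (Bor H * Bor H)%type => (p.1, (inv p.2 : Bor H)))) //.
  apply: (measurableT_comp hmul).
  apply: measurable_fun_pair; first exact: measurable_fst.
  by apply: measurableT_comp => //; exact: measurable_snd.
have mS2 : measurable S2.
  apply: measurableI.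
    by apply: (mpre fst) => //; exact: measurable_fst.
  exact: (mpre (fun p => mul p.1 (inv p.2))).
have e1 : (\int[lam']_x lam' (xsection S1 x) = lam B0 * lam A)%E.
  transitivity (\int[lam']_(x in A) (cst (lam B0)) x)%E; last first.
    by rewrite integral_cst.
  rewrite [RHS]integral_mkcond; apply: eq_integral => x _ /=.
  rewrite /patch; case: ifPn => Ax; rewrite ?inE in Ax.
    rewrite /lam' /lamf /=; rewrite -(hl x _ mB0); congr (lam _).
    by apply/seteqP; split => y; rewrite /xsection /= inE /=; [case | split].
  rewrite /lam' /lamf /= (_ : xsection S1 x = set0) ?measure0 //.
  apply/seteqP; split => y //; rewrite /xsection /= inE.
  by move=> [Ax' _]; move/negP: Ax; apply; rewrite inE.
have e2 : (\int[lam']_y lam' (ysection S1 y) = \int[lam']_y lam' (ysection S2 y))%E.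
  apply: eq_integral => y _; rewrite /lam' /lamf /=.
  rewrite -(hr (inv y) _ (measurable_ysection y mS1)); congr (lam _).
  apply/seteqP; split => x; rewrite /ysection /= !inE /=.
    by move=> [Ax B0x]; split => //; rewrite -mA' mV m1' in B0x.
  by move=> [B0x Ax]; split => //; rewrite -mA' mV m1'.
have e3 : (\int[lam']_x lam' (xsection S2 x) = lam B0 * lam (inv @^-1` A))%E.
  transitivity (\int[lam']_(x in B0) (cst (lam (inv @^-1` A))) x)%E; last first.
    by rewrite integral_cst // muleC.
  rewrite [RHS]integral_mkcond; apply: eq_integral => x _ /=.
  rewrite /patch; case: ifPn => Bx; rewrite ?inE in Bx.
    rewrite /lam' /lamf /=; rewrite -(hr x _ (measurable_xsection x mS2)).
    congr (lam _).
    apply/seteqP; split => z; rewrite /xsection /= !inE /=.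
      by move=> [_]; rewrite (grp_invM _ _ _ hg) mA' mV' m1.
    by move=> Az; split => //; rewrite (grp_invM _ _ _ hg) mA' mV' m1.
  rewrite /lam' /lamf /= (_ : xsection S2 x = set0) ?measure0 //.
  apply/seteqP; split => y //; rewrite /xsection /= inE.
  by move=> [Bx' _]; move/negP: Bx; apply; rewrite inE.
have := sigma_finite_tonelli lam' lam' mS1.
rewrite e1 e2 -(sigma_finite_tonelli lam' lam' mS2) e3 => h.
have fB : lam B0 \is a fin_num by rewrite ge0_fin_numE.
move: h B0pos; rewrite -(fineK fB) lte_fin => h c0.
have : ((fine (lam B0))^-1%:E * ((fine (lam B0))%:E * lam A) =
        (fine (lam B0))^-1%:E * ((fine (lam B0))%:E * lam (inv @^-1` A)))%E.
  by rewrite h.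
by rewrite !muleA -EFinM mulVf ?gt_eqF // !mul1e => ->.
Qed.

Lemma haar_inv_integral (g : Bor H -> \bar R) : measurable_fun setT g ->
  (forall x, 0 <= g x)%E ->
  (\int[lam]_x g (inv x) = \int[lam]_x g x)%E.
Proof.
move=> mg g0.
rewrite [RHS](eq_measure_integral (pushforward lam (inv : Bor H -> Bor H))); last first.
  by move=> A mA _; rewrite /pushforward; symmetry; exact: haar_inv.
rewrite (ge0_integral_pushforward hinv) //.
Qed.

End Inv.



Section Coupling.
Context (R : realType) (G : ptopologicalType) d (Om : measurableType d)
  (lam : {measure set (Bor G) -> \bar R}) (mu nu : {measure set Om -> \bar R})
  (act : G -> Om -> Om) (X : set Om) (pi : Om -> G) (rho : Om -> Om).
Hypotheses (hs : sigma_finite setT lam)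
  (hact : measurable_fun setT (fun p : (Bor G * Om)%type => act p.1 p.2))
  (hfi : fund_iso lam mu act X nu pi rho).

Let mX : measurable X. Proof. by case: hfi => -[]. Qed.
Let nuXfin : (nu X < +oo)%E. Proof. by case: hfi => -[]. Qed.

Definition lamGf : set (Bor G) -> \bar R := lam.
HB.instance Definition _ := Measure.on lamGf.
HB.instance Definition _ := Measure_isSigmaFinite.Build _ _ _ lamGf hs.
Let lam' : {sigma_finite_measure set (Bor G) -> \bar R} := lamGf.

Definition nuXf : set Om -> \bar R := mrestr nu mX.
HB.instance Definition _ := Measure.on nuXf.
Let nuXs : sigma_finite setT nuXf.
Proof.
apply: fin_num_fun_sigma_finite; first by rewrite /nuXf /mrestr set0I measure0.
move=> U mU; rewrite ge0_fin_numE ?measure_ge0 //.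
rewrite /nuXf /mrestr; apply: le_lt_trans nuXfin; apply: le_measure;
  rewrite ?inE //; exact: measurableI.
Qed.
HB.instance Definition _ := Measure_isSigmaFinite.Build _ _ _ nuXf nuXs.
Let nuX' : {sigma_finite_measure set Om -> \bar R} := nuXf.

Let Phi (w : Om) : (Bor G * Om)%type := ((pi w : Bor G), rho w).
Let mPhi : measurable_fun setT Phi. Proof. by case: hfi. Qed.
Let Xp : set (Bor G * Om)%type := [set p | X p.2].
Let mXp : measurable Xp.
Proof. rewrite /Xp -[X in measurable X]setTI; exact: measurable_snd. Qed.
Let actp (p : (Bor G * Om)%type) := act p.1 p.2.

Let P := (lam' \x nuX')%E.

Let Pagree (S : set (Bor G * Om)%type) : measurable S -> S `<=` Xp ->
  P S = pushforward mu Phi S.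
Proof.
move=> mS SX; rewrite /pushforward.
have [_ _ h1 h2 h3] := hfi.
rewrite h3; last by rewrite -[_ @^-1` _]setTI; exact: mPhi.
rewrite /P /product_measure1; apply: eq_integral => g _.
rewrite /nuX' /nuXf /mrestr /=; congr (nu _).
apply/seteqP; split => x.
  rewrite /xsection /= !inE => -[Sgx Xx]; split => //.
  by rewrite /Phi /= (h2 _ _ Xx).1 (h2 _ _ Xx).2.
rewrite /xsection /= !inE => -[Xx]; rewrite /Phi /= (h2 _ _ Xx).1 (h2 _ _ Xx).2.
by move=> Sgx; split.
Qed.

Lemma coupling_integral (F : Om -> \bar R) : measurable_fun setT F ->
  (forall w, 0 <= F w)%E ->
  (\int[mu]_w F w = \int[nu]_(x in X) \int[lam]_g F (act g x))%E.
Proof.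
move=> mF F0.
have [_ _ h1 h2 h3] := hfi.
have mFa : measurable_fun setT (F \o actp) by exact: measurableT_comp.
have e1 : (\int[mu]_w F w = \int[mu]_w ((F \o actp) \_ Xp) (Phi w))%E.
  apply: eq_integral => w _; rewrite /patch /Phi /actp /=.
  have [Xr e] := h1 w.
  by rewrite (mem_set (Xr : Xp (pi w, rho w))) e.
rewrite e1.
have mh : measurable_fun setT ((F \o actp) \_ Xp).
  by apply/(measurable_restrictT _ mXp); exact: measurable_funS mFa.
have h0 : forall p, (0 <= ((F \o actp) \_ Xp) p)%E.
  by move=> p; rewrite /patch; case: ifPn => _ //; exact: F0.
have e2 : (\int[pushforward mu Phi]_p ((F \o actp) \_ Xp) p =
    \int[mu]_w ((F \o actp) \_ Xp) (Phi w))%E.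
  rewrite (ge0_integral_pushforward mPhi) //.
rewrite -e2 -integral_mkcond.
rewrite (eq_measure_integral P); last by move=> S mS SX; first [exact: Pagree | symmetry; exact: Pagree].
rewrite integral_mkcond (fubini_tonelli2 _ mh h0).
transitivity (\int[nuX']_(y in X) fubini_G lam' ((F \o actp) \_ Xp) y)%E.
  rewrite [RHS]integral_mkcond; apply: eq_integral => y _.
  rewrite /patch; case: ifPn => // yX.
  rewrite /fubini_G; apply: integral0_eq => x _.
  rewrite /patch ifN //; move: yX; apply: contra; rewrite !inE //.
rewrite [LHS](eq_measure_integral nu); last first.
  by move=> A mA AX; exact: (congr1 nu (setIidl AX)).
apply: eq_integral => y /[!inE] Xy; rewrite /fubini_G.
apply: eq_integral => x _; rewrite /patch ifT //.
by rewrite inE.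
Qed.

End Coupling.

Theorem mainTheorem10 (R : realType) (G H : ptopologicalType)
  (mulG : G -> G -> G) (oneG : G) (invG : G -> G)
  (mulH : H -> H -> H) (oneH : H) (invH : H -> H)
  (lamG : {measure set (Bor G) -> \bar R}) (lamH : {measure set (Bor H) -> \bar R})
  (d : measure_display) (Om : measurableType d) (mu : {measure set Om -> \bar R})
  (actG : G -> Om -> Om) (actH : H -> Om -> Om) (XG XH : set Om)
  (nuG nuH : {measure set Om -> \bar R})
  (piG : Om -> G) (rhoG : Om -> Om) (piH : Om -> H) (rhoH : Om -> Om) :
  topological_group mulG oneG invG -> lcsc G ->
  compactly_generated mulG oneG invG -> non_discrete G ->
  unimodular_haar mulG lamG ->
  topological_group mulH oneH invH -> lcsc H ->
  compactly_generated mulH oneH invH -> non_discrete H ->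
  unimodular_haar mulH lamH ->
  mp_action mulG oneG mu actG -> mp_action mulH oneH mu actH ->
  (forall g h w, actG g (actH h w) = actH h (actG g w)) ->
  fund_iso lamG mu actG XG nuG piG rhoG ->
  fund_iso lamH mu actH XH nuH piH rhoH ->
  propP1 XG XH nuG nuH ->
  propP3 invG invH lamG lamH actG actH XG XH nuG nuH piG rhoG piH rhoH ->
  exists K' : R, 0 < K' /\
    forall p : R, 1 <= p ->
    forall f : H -> R, measurable_fun setT (f : Bor H -> R) ->
      (\int[lamH]_h (powR `|f h| p)%:E < +oo)%E ->
      (lamH [set h : Bor H | f h != 0%R] < +oo)%E ->
      (K'%:E * \int[lamH]_h (powR `|f h| p)%:E
        <= \int[nuG]_(x in XG)
             \int[lamG]_g (powR `|ftilde invH piH f (actG g x)| p)%:E)%E.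

Proof.
move=> [grpG mcG icG] lcG _ _ [hlG hrG finG posG].
move=> [grpH mcH icH] lcH _ _ [hlH hrH finH posH].
move=> [mactG _ _ _] [mactH _ _ _] _ fiG fiH [C [C0 [hC pos]]] _.
have [[mXG nuGfin] mPhiG _ _ _] := fiG.
have [[mXH nuHfin] mPhiH h1H h2H _] := fiH.
have hsG := lcsc_sigma_finite _ _ _ lcG finG.
have hsH := lcsc_sigma_finite _ _ _ lcH finH.
have nuHpos : (0 < nuH XH)%E.
  have := pos; rewrite -[XG `&` XH]setTI hC //.
  have mI : measurable (XG `&` XH) by exact: measurableI.
  rewrite setTI => hp.
  apply: (@lt_le_trans _ _ (nuH (XG `&` XH))).
    rewrite lt0e measure_ge0 andbT; apply/eqP => h0.
    by move: hp; rewrite h0 mule0 ltxx.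
  by apply: le_measure; rewrite ?inE //; apply: measurableI.
exists (fine (nuH XH)); split.
  by apply: fine_gt0; rewrite nuHpos nuHfin.
move=> p p1 f mf _ _.
pose g : Bor H -> \bar R := fun h => (powR `|f h| p)%:E.
have mg : measurable_fun setT g.
  apply/(measurable_EFinP _ (fun h : Bor H => powR `|f h| p)).
  apply: (measurableT_comp (measurable_powR p)).
  first [ by apply: measurableT_comp => //; exact: normr_measurable
        | idtac "A"; by apply: measurableT_comp mf
        | idtac "B"; by apply: (measurableT_comp _ mf)
        | idtac "C"; exact: measurable_funS (normr_measurable _) ].
have g0 : forall h, (0 <= g h)%E by move=> h; rewrite lee_fin powR_ge0.
have minvH : measurable_fun setT (invH : Bor H -> Bor H) by exact: (cont_mfun _ _ _ icH).
have mpiH : measurable_fun setT (piH : Om -> Bor H).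
  rewrite (_ : piH = fst \o (fun w => ((piH w : Bor H), rhoH w))) //.
  exact: measurableT_comp measurable_fst mPhiH.
pose F : Om -> \bar R := fun w => g (invH (piH w)).
have mF : measurable_fun setT F.
  exact: (measurableT_comp mg (measurableT_comp minvH mpiH)).
have F0 : forall w, (0 <= F w)%E by move=> w; exact: g0.
have -> : (\int[nuG]_(x in XG)
     \int[lamG]_g (powR `|ftilde invH piH f (actG g x)| p)%:E)%E =
    (\int[mu]_w F w)%E.
  by rewrite (coupling_integral _ _ _ _ _ _ _ _ _ _ _ hsG mactG fiG _ mF F0).
rewrite (coupling_integral _ _ _ _ _ _ _ _ _ _ _ hsH mactH fiH _ mF F0).
have [scH _] : @second_countable H /\ True by case: lcH.
have hmulH := mul_mfun _ _ scH mcH.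
have [U [oU U1 U0 Ufin]] := lcsc_pos_fin _ _ _ lcH finH posH oneH.
have hinvI := haar_inv_integral _ _ _ _ _ _ grpH hmulH minvH hlH hrH hsH _ (open_Bor _ _ oU) U0 Ufin _ mg g0.
have eq : (\int[nuH]_(y in XH) \int[lamH]_h F (actH h y) =
    \int[nuH]_(y in XH) (cst (\int[lamH]_h g h)) y)%E.
  apply: eq_integral => y /[!inE] Xy /=.
  rewrite -hinvI; apply: eq_integral => h _.
  by rewrite /F (h2H _ _ Xy).1.
rewrite eq (integral_cst _ mXH).
have fH : nuH XH \is a fin_num by rewrite ge0_fin_numE ?measure_ge0.
rewrite (fineK fH) muleC.
by rewrite /g.
Qed.
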